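(* Consider the data-selling model described in the context, with network $G$ on $n$ buyers, and assume $z_0<\frac{1}{2\sqrt{\gamma}}\cdot\frac{n+1}{2n+1}$. Let $m=\alpha(G)$, and let $C$ and $C'$ be optimal contracts. (Their target sets $M(C),M(C')$ are maximum independent sets of size $m$, and both have common precision $z=\sqrt{m/\gamma}-z_0$.) Let $k(C)=(m_1,\dots,m_{n-m})$ be the values $m_i=|N_i\cap M(C)|$ for $i\in N\setminus M(C)$, arranged in non-increasing order. Define $k(C')=(m'_1,\dots,m'_{n-m})$ in the same way. Then $w(z_0,G,M(C))\ge w(z_0,G,M(C'))$ if either of the following holds: (i) $k(C)\ge k(C')$ componentwise; (ii) $\sum_{i=1}^{n-m}m_i=\sum_{i=1}^{n-m}m'_i$, and $k(C)$ dominates $k(C')$ in the second-order stochastic dominance sense (that is, the uniform distribution on the entries of $k(C)$ second-order stochastically dominates the uniform distribution on the entries of $k(C')$).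
   Context: Model. There is a finite set of buyers $N=\{1,\dots,n\}$ and an undirected network $G$ on $N$: for $i\neq j$, $g_{ij}=g_{ji}\in\{0,1\}$, with $g_{ij}=1$ iff $i$ and $j$ are linked. $N_i=\{j\neq i:g_{ij}=1\}$ is the set of neighbors of $i$. A state $\theta\sim N(0,1/z_0)$ with $z_0>0$ is unknown to all. A contract $C$ of the seller consists of a target set $M(C)\subseteq N$, a common precision $z>0$, and prices $p_i\ge0$ for $i\in M(C)$. Each $i\in M(C)$ receives a signal $s_i=\theta+\varepsilon_i$, with $\varepsilon_i\sim N(0,1/z)$ independent. Each buyer observes the signals of his neighbors in $M(C)$ (and his own if he is in $M(C)$) and then chooses $a_i$ to maximize $E[-(a_i-\theta)^2]$. With $m_i=|N_i\cap M(C)|$, buyer $i\in M(C)$ gets expected payoff $-\frac{1}{z_0+(m_i+1)z}-p_i$, and buyer $i\notin M(C)$ gets $-\frac{1}{z_0+m_iz}$. Buyer $i\in M(C)$ accepts iff $p_i\le \frac{1}{z_0+m_iz}-\frac{1}{z_0+(m_i+1)z}$. A contract is feasible if every $i\in M(C)$ accepts. The seller's profit is $\pi(C)=\sum_{i\in M(C)}p_i-\gamma z$ with $\gamma>0$. An optimal contract is a feasible contract maximizing $\pi$. A maximum independent set is a largest set of pairwise unlinked buyers, and $\alpha(G)$ is its size. At an optimal contract (with prices $p_i=\frac1{z_0}-\sqrt{\gamma/m}$ and $z=\sqrt{m/\gamma}-z_0$), the consumer welfare (the sum of buyers' expected payoffs) is $$w(z_0,G,M(C))=-\sum_{i\in M(C)}\frac{1}{z_0}-\sum_{i\in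 N\setminus M(C)}\frac{1}{z_0+m_i\left(\sqrt{m/\gamma}-z_0\right)}.$$ *)

(* Defs.v *)
From HB Require Import structures.
From mathcomp Require Import all_boot all_order all_algebra.
From mathcomp Require Import reals.
Set Implicit Arguments. Unset Strict Implicit. Unset Printing Implicit Defensive.
Import Order.TTheory GRing.Theory Num.Theory.
Local Open Scope ring_scope.

Section Model.
Variables (R : realType) (T : finType) (e : rel T).

Definition nbrs (i : T) : {set T} := [set j | (j != i) && e i j].

Definition mi (M : {set T}) (i : T) : nat := #|nbrs i :&: M|.

Definition independent (A : {set T}) : bool :=
  [forall i in A, forall j in A, ~~ e i j].
Definition alpha : nat := \max_(A : {set T} | independent A) #|A|.

(* A contract: target set, common precision, prices (only prices of
   buyers in the target set matter). *)
Record contract := Contract {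
  target : {set T};
  prec : R;
  price : T -> R }.

Variables (z0 gamma : R).

Definition accepts (C : contract) (i : T) : Prop :=
  price C i <= (z0 + (mi (target C) i)%:R * prec C)^-1
               - (z0 + ((mi (target C) i).+1)%:R * prec C)^-1.

Definition feasible (C : contract) : Prop :=
  0 < prec C /\ (forall i, i \in target C -> 0 <= price C i) /\
  (forall i, i \in target C -> accepts C i).

Definition profit (C : contract) : R :=
  \sum_(i in target C) price C i - gamma * prec C.

Definition optimal (C : contract) : Prop :=
  feasible C /\ forall C', feasible C' -> profit C' <= profit C.

(* consumer welfare w(z0,G,M) at the optimal contract, m = alpha(G) *)
Definition welfare (M : {set T}) : R :=
  - (\sum_(i in M) z0^-1)
  - \sum_(i in ~: M)
      (z0 + (mi M i)%:R * (Num.sqrt (alpha%:R / gamma) - z0))^-1.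

Definition kvec (M : {set T}) : seq nat :=
  sort geq [seq mi M i | i <- enum (~: M)].

End Model.

Definition comp_ge (k k' : seq nat) : bool := all2 (fun a b => b <= a)%N k k'.

(* Second-order stochastic dominance of the uniform distribution on the
   entries of k over that on the entries of k': for every t,
   int_{-oo}^t F_k <= int_{-oo}^t F_k', i.e.
   (1/|k|) sum_i (t - k_i)^+ <= (1/|k'|) sum_i (t - k'_i)^+. *)
Definition sosd (R : realType) (k k' : seq nat) : Prop :=
  forall t : R,
    (size k)%:R^-1 * \sum_(x <- k) Num.max (t - x%:R) 0
    <= (size k')%:R^-1 * \sum_(x <- k') Num.max (t - x%:R) 0.

(* Main.v *)
Require Import Defs.
From HB Require Import structures.
From mathcomp Require Import all_boot all_order all_algebra.
From mathcomp Require Import reals.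
From mathcomp Require Import ring lra.
From Stdlib Require Import Lia.
From mathcomp Require Import zify.
Import Order.TTheory GRing.Theory Num.Theory.
Local Open Scope ring_scope.
Set Implicit Arguments. Unset Strict Implicit.

Section Num.
Variables (R : realType) (z0 : R).

Definition Dl (z : R) (k : nat) : R :=
  (z0 + k%:R * z)^-1 - (z0 + k.+1%:R * z)^-1.

Lemma DlE (hz0 : 0 < z0) (z : R) k : 0 <= z ->
  Dl z k = z / ((z0 + k%:R * z) * (z0 + k%:R * z + z)).
Proof.
move=> hz.
have h1 : 0 < z0 + k%:R * z.
  have := mulr_ge0 (ler0n R k) hz; move=> Hkz; lra.
rewrite /Dl -addn1 natrD mulrDl mul1r addrA.
have h2 : 0 < z0 + k%:R * z + z by nra.
field; apply/andP; split; rewrite gt_eqF //.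
Qed.

Lemma Dl_ge0 (hz0 : 0 < z0) (z : R) k : 0 <= z -> 0 <= Dl z k.
Proof.
move=> hz; rewrite DlE //.
have h1 : 0 < z0 + k%:R * z.
  have := mulr_ge0 (ler0n R k) hz; move=> Hkz; lra.
apply: divr_ge0 => //; apply: mulr_ge0; nra.
Qed.

Lemma Dl_decr (hz0 : 0 < z0) (z : R) k l : 0 <= z -> (k <= l)%N -> Dl z l <= Dl z k.
Proof.
move=> hz hkl; rewrite !DlE //.
have hk : (k%:R : R) <= l%:R by rewrite ler_nat.
have h1 : 0 < z0 + k%:R * z.
  have := mulr_ge0 (ler0n R k) hz; move=> Hkz; lra.
have h2 : z0 + k%:R * z <= z0 + l%:R * z by nra.
apply: ler_wpM2l => //; rewrite lef_pV2 ?posrE; nra.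
Qed.

Lemma Dl_c (hz0 : 0 < z0) (z : R) k : 0 < z -> (1 <= k)%N -> (k.+1)%:R * Dl z k <= 3 / (8 * z0).
Proof.
move=> hz hk; rewrite DlE //; last exact: ltW.
have hK : 1 <= (k%:R : R) by rewrite ler1n.
set K := (k%:R : R) in hK *.
have -> : (k.+1%:R : R) = K + 1 by rewrite -addn1 natrD.
have h1 : 0 < z0 + K * z by nra.
have h2 : 0 < z0 + K * z + z by nra.
rewrite -subr_ge0.
have -> : 3 / (8 * z0) - (K + 1) * (z / ((z0 + K * z) * (z0 + K * z + z))) =
  (3 * ((z0 + K * z) * (z0 + K * z + z)) - (K + 1) * z * (8 * z0)) /
  (8 * z0 * ((z0 + K * z) * (z0 + K * z + z))).
  by field; rewrite !gt_eqF.
apply: divr_ge0; last by apply: mulr_ge0; nra.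
have sq : 0 <= (6 * z0 - (2 * K + 5) * z) ^+ 2 by apply: sqr_ge0.
have q : 0 <= (32 * K ^+ 2 + 16 * K - 25) * z ^+ 2.
  apply: mulr_ge0; last exact: sqr_ge0. nra.
nra.
Qed.


End Num.

Section Greedy.
Variables (R : realType) (T : finType) (e : rel T).
Hypotheses (e_sym : symmetric e) (e_irr : irreflexive e).

Lemma indepU1 (I : {set T}) v :
  independent e I -> (forall j, j \in I -> ~~ e v j) -> independent e (v |: I).
Proof.
move=> /forallP hI hv; apply/forallP => i; apply/implyP => iI.
apply/forallP => j; apply/implyP => jI.
case/setU1P: iI => [->|iI]; case/setU1P: jI => [->|jI].
- by rewrite e_irr.
- exact: hv.
- by rewrite e_sym; apply: hv.
- by have /implyP/(_ iI)/forallP/(_ j)/implyP/(_ jI) := hI i.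
Qed.

Lemma indep_back (S : {set T}) v :
  nbrs e v :&: S = set0 ->
  independent e (S :\: (v |: (nbrs e v :&: S))) -> independent e S.
Proof.
move=> h0 /forallP hI; apply/forallP => i; apply/implyP => iS.
apply/forallP => j; apply/implyP => jS.
have nb : forall x, x \in S -> x != v -> ~~ e v x.
  move=> x xS xv; apply/negP => evx.
  have : x \in nbrs e v :&: S by rewrite !inE xv evx xS.
  by rewrite h0 inE.
have inD : forall x, x \in S -> x != v -> x \in S :\: (v |: (nbrs e v :&: S)).
  move=> x xS xv; rewrite !inE xS xv /= andbT.
  by rewrite (negbTE xv) (negbTE (nb x xS xv)).
case: (eqVneq i v) => [->|iv].
  case: (eqVneq j v) => [->|jv]; first by rewrite e_irr.
  exact: nb.
case: (eqVneq j v) => [->|jv]; first by rewrite e_sym; exact: nb.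
by have /implyP/(_ (inD i iS iv))/forallP/(_ j)/implyP/(_ (inD j jS jv)) := hI i.
Qed.

Variables (z0 z : R).
Definition W (S : {set T}) := \sum_(i in S) Dl z0 z (mi e S i).
Definition cst := 3 / (8 * z0).
Definition Bz := Num.max (Dl z0 z 0) cst.

Lemma greedy (hz0 : 0 < z0) (hz : 0 < z) (S : {set T}) :
  exists I : {set T}, [/\ I \subset S, independent e I,
    W S <= #|I|%:R * Bz &
    (~~ independent e S -> W S + Bz <= #|I|%:R * Bz + cst)].
Proof.
have hB0 : 0 <= Bz.
  by rewrite /Bz le_max Dl_ge0 // ltW.
have hcB : cst <= Bz by rewrite /Bz le_max lexx orbT.
elim: {S}_.+1 {-2}S (ltnSn #|S|) => // n IH S hS.
case: (eqVneq S set0) => [->|/set0Pn [v0 v0S]].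
  exists set0; split.
  - exact: sub0set.
  - by apply/forallP => i; rewrite inE.
  - by rewrite /W big_set0 cards0 mul0r.
  - by move/negP; case; apply/forallP => i; rewrite inE.
case: (@arg_minnP _ v0 (fun i => i \in S) (mi e S) v0S) => v vS vmin.
set d := mi e S v.
set Nv := v |: (nbrs e v :&: S).
set S' := S :\: Nv.
have vNv : v \in Nv by rewrite !inE eqxx.
have NvS : Nv \subset S.
  by rewrite subUset sub1set vS subsetIr.
have vnotS' : v \notin S' by rewrite in_setD vNv.
have S'S : S' \subset S by apply: subsetDl.
have hS' : (#|S'| < n)%N.
  have : (#|S'| <= #|S :\ v|)%N.
    apply: subset_leq_card; apply/subsetP => x xS'; rewrite in_setD1 (subsetP S'S _ xS') andbT; by apply: contraNneq vnotS' => <-.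
  by move: hS; rewrite (cardsD1 v S) vS; lia.
have [I' [I'S' indI' WI' WI'2]] := IH S' hS'.
have vI' : v \notin I'.
  by apply/negP => /(subsetP I'S'); apply/negP.
exists (v |: I').
have cardI : #|v |: I'| = #|I'|.+1 by rewrite cardsU1 vI'.
have cardNv : #|Nv| = d.+1.
  by rewrite cardsU1 !inE eqxx.
have splitW : W S = \sum_(i in Nv) Dl z0 z (mi e S i) + \sum_(i in S') Dl z0 z (mi e S i).
  by rewrite /W (big_setID Nv) /=; congr (_ + _); rewrite (setIidPr NvS).
have hNv : \sum_(i in Nv) Dl z0 z (mi e S i) <= d.+1%:R * Dl z0 z d.
  rewrite mulr_natl -cardNv -sumr_const; apply: ler_sum => i iNv.
  apply: Dl_decr => //; first exact: ltW.
  by apply: vmin; apply: (subsetP NvS).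
have hS'W : \sum_(i in S') Dl z0 z (mi e S i) <= W S'.
  apply: ler_sum => i iS'; apply: Dl_decr => //; first exact: ltW.
  by apply: subset_leq_card; apply: setIS.
have hdB : d.+1%:R * Dl z0 z d <= Bz.
  move: (d) => [|dd]; first by rewrite mul1r /Bz le_max lexx.
  by apply: le_trans hcB; apply: Dl_c.
have natS : (#|I'|.+1%:R : R) = #|I'|%:R + 1 by rewrite -addn1 natrD.
split.
- rewrite subUset sub1set vS; exact: subset_trans I'S' S'S.
- apply: indepU1 => // j jI'.
  have : j \in S' by apply: (subsetP I'S').
  rewrite in_setD => /andP [jNv jS].
  have jv : j != v by apply: contraNneq vI' => <-.
  apply/negP => evj; move/negP: jNv; apply.
  by rewrite !inE jv evj jS orbT.
- rewrite cardI natS mulrDl mul1r; lra.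
- move=> nind; rewrite cardI natS mulrDl mul1r.
  case: (posnP d) => [d0|dpos].
  + have h0 : nbrs e v :&: S = set0 by apply/eqP; rewrite -cards_eq0; apply/eqP; exact: d0.
    have nind' : ~~ independent e S'.
      by apply/negP => ind'; move/negP: nind; apply; exact: (indep_back h0 ind').
    have := WI'2 nind'.
    move: hdB; rewrite d0 mul1r => hdB'; move: hNv; rewrite d0 mul1r => hNv'. 
    move=> h; lra.
  + have hc : d.+1%:R * Dl z0 z d <= cst by apply: Dl_c => //.
    lra.
Qed.

End Greedy.

Section Conv.
Variables (R : realType) (f : nat -> R).
Definition DD j := f j - f j.+1.
Definition maxp (t x : nat) : R := Num.max (t%:R - x%:R) 0.

Lemma maxp_step t x :
  maxp t.+1 x - maxp t.+1 x.+1 = if (x <= t)%N then 1 else 0.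
Proof.
rewrite /maxp; case: leqP => h.
  have h1 : (x%:R : R) <= t%:R by rewrite ler_nat.
  rewrite -!natr1 !max_l; lra.
have h1 : (t%:R : R) + 1 <= x%:R by rewrite natr1 ler_nat.
rewrite -!natr1 !max_r; lra.
Qed.

Lemma maxp_zero t x : (t <= x)%N -> maxp t x = 0.
Proof.
move=> h; have h1 : (t%:R : R) <= x%:R by rewrite ler_nat.
rewrite /maxp max_r //; lra.
Qed.

Lemma tel x d :
  \sum_(t < x + d) (DD t - DD t.+1) * (if (x <= t)%N then 1 else 0) = DD x - DD (x + d).
Proof.
elim: d => [|d IH].
  rewrite addn0 subrr big1 // => t _.
  by rewrite leqNgt ltn_ord mulr0.
by rewrite addnS big_ord_recr /= IH leq_addr mulr1; ring.
Qed.

Variable N : nat.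
Definition gN x := f N + (N%:R - x%:R) * DD N +
  \sum_(t < N) (DD t - DD t.+1) * maxp t.+1 x.

Lemma g_step x : (x < N)%N -> gN x - gN x.+1 = DD x.
Proof.
move=> hx.
have e1 : \sum_(t < N) (DD t - DD t.+1) * (maxp t.+1 x - maxp t.+1 x.+1) =
     \sum_(t < N) (DD t - DD t.+1) * maxp t.+1 x - \sum_(t < N) (DD t - DD t.+1) * maxp t.+1 x.+1.
  by rewrite -sumrB; apply: eq_bigr => t _; rewrite mulrBr.
have e2 : \sum_(t < N) (DD t - DD t.+1) * (maxp t.+1 x - maxp t.+1 x.+1) = DD x - DD N.
  under eq_bigr do rewrite maxp_step.
  by have := tel x (N - x); rewrite subnKC //; exact: ltnW.
rewrite e2 in e1.
rewrite /gN.
set S1 := \sum_(t < N) (DD t - DD t.+1) * maxp t.+1 x in e1 *.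
set S2 := \sum_(t < N) (DD t - DD t.+1) * maxp t.+1 x.+1 in e1 *.
rewrite -natr1.
set a := f N; set b := DD N; set c := DD x; set X := (x%:R : R); set Y := (N%:R : R).
have -> : (Y - (X + 1)) * b = (Y - X) * b - b by ring.
set P := (Y - X) * b.
move: e1; rewrite -/b -/c => h; lra.
Qed.

Lemma g_repr x : (x <= N)%N -> f x = gN x.
Proof.
move=> hx; rewrite -(ssrnat.subKn hx).
elim: (N - x)%N (leq_subr x N) => [|i IH] hi.
  rewrite subn0 /gN subrr mul0r addr0 big1 ?addr0 // => t _.
  by rewrite maxp_zero ?mulr0.
have h1 : (N - i.+1 < N)%N by lia.
have h2 : (N - i.+1).+1 = (N - i)%N by lia.
have := g_step h1; rewrite h2 -IH; last by lia.
rewrite /DD h2 => h; lra.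
Qed.

Lemma affine_sum (a b : R) (k : seq nat) :
  \sum_(x <- k) (a - b * x%:R) = (size k)%:R * a - b * (\sum_(x <- k) x)%N%:R.
Proof.
elim: k => [|x k IH]; first by rewrite !big_nil mul0r mulr0 subr0.
rewrite !big_cons IH /= natrD -addn1 natrD; ring.
Qed.

Hypothesis Ddec : forall j, DD j.+1 <= DD j.

Lemma conv_sosd (k k' : seq nat) :
  size k = size k' -> (\sum_(x <- k) x)%N = (\sum_(x <- k') x)%N ->
  (forall x, x \in k -> (x <= N)%N) -> (forall x, x \in k' -> (x <= N)%N) ->
  (forall t : nat, \sum_(x <- k) maxp t x <= \sum_(x <- k') maxp t x) ->
  \sum_(x <- k) f x <= \sum_(x <- k') f x.
Proof.
move=> hs hS hk hk' hP.
have rep : forall l : seq nat, (forall x, x \in l -> (x <= N)%N) ->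
  \sum_(x <- l) f x = ((size l)%:R * (f N + N%:R * DD N) - DD N * (\sum_(x <- l) x)%N%:R)
    + \sum_(t < N) (DD t - DD t.+1) * \sum_(x <- l) maxp t.+1 x.
  move=> l hl.
  rewrite big_seq (eq_bigr gN); last by move=> x /hl; apply: g_repr.
  rewrite -big_seq /gN big_split /= -affine_sum.
  congr (_ + _).
    by apply: eq_bigr => x _; ring.
  rewrite exchange_big /=; apply: eq_bigr => t _.
  by rewrite mulr_sumr.
rewrite (rep k hk) (rep k' hk') hs hS lerD2l.
apply: ler_sum => t _; apply: ler_wpM2l; last exact: hP.
rewrite subr_ge0; exact: Ddec.
Qed.

End Conv.

Section NumB.
Variable R : realType.

Lemma amgm (z0 sg p z : R) : 0 < z0 -> 0 <= p -> 0 < z ->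
  p * Dl z0 z 0 - sg ^+ 2 * z <= p / z0 - 2 * Num.sqrt p * sg + sg ^+ 2 * z0.
Proof.
move=> hz0 hp hz.
have hp2 := sqr_sqrtr hp.
set sp := Num.sqrt p in hp2 *.
rewrite /Dl mul0r addr0 mul1r -hp2.
have hs : 0 < z0 + z by lra.
rewrite -subr_ge0.
have -> : sp ^+ 2 / z0 - 2 * sp * sg + sg ^+ 2 * z0 -
   (sp ^+ 2 * (z0^-1 - (z0 + z)^-1) - sg ^+ 2 * z) = (sp - sg * (z0 + z)) ^+ 2 / (z0 + z).
  by field; rewrite !gt_eqF.
by apply: divr_ge0; [apply: sqr_ge0 | apply: ltW].
Qed.

Lemma N1 (z0 sg sa sp : R) : 0 < z0 -> 0 <= sg -> z0 * sg < 1/3 -> 1 <= sa ->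
  0 <= sp -> sp < sa ->
  sp ^+ 2 / z0 - 2 * sp * sg + sg ^+ 2 * z0 < sa ^+ 2 / z0 - 2 * sa * sg + sg ^+ 2 * z0.
Proof.
move=> hz0 hsg hy hsa hsp hlt.
rewrite -subr_gt0.
have -> : sa ^+ 2 / z0 - 2 * sa * sg + sg ^+ 2 * z0 - (sp ^+ 2 / z0 - 2 * sp * sg + sg ^+ 2 * z0)
  = (sa - sp) * (sa + sp - 2 * (z0 * sg)) / z0.
  by field; rewrite gt_eqF.
apply: divr_gt0 => //; apply: mulr_gt0; lra.
Qed.

Lemma N2 (z0 sg sa : R) : 0 < z0 -> 0 <= sg -> z0 * sg < 1/3 -> 1 <= sa ->
  sa ^+ 2 * (3 / (8 * z0)) < sa ^+ 2 / z0 - 2 * sa * sg + sg ^+ 2 * z0.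
Proof.
move=> hz0 hsg hy hsa.
rewrite -subr_gt0.
have -> : sa ^+ 2 / z0 - 2 * sa * sg + sg ^+ 2 * z0 - sa ^+ 2 * (3 / (8 * z0))
  = (5/8 * (sa - 8/5 * (z0 * sg)) ^+ 2 - 3/5 * (z0 * sg) ^+ 2) / z0.
  by field; rewrite gt_eqF.
apply: divr_gt0 => //.
set y := z0 * sg in hy *.
have hy0 : 0 <= y by apply: mulr_ge0; lra.
have h1 : 7/15 <= sa - 8/5 * y by lra.
have h2 : 49/225 <= (sa - 8/5 * y) ^+ 2 by nra.
have h3 : y ^+ 2 <= 1/9 by nra.
lra.
Qed.

Lemma N3 (z0 sg sa sp : R) : 0 < z0 -> 0 <= sg -> z0 * sg < 1/3 -> 1 <= sp ->
  0 <= sa -> sa ^+ 2 = sp ^+ 2 + 1 ->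
  sp ^+ 2 / z0 - 2 * sp * sg + sg ^+ 2 * z0 + 3 / (8 * z0) <
  sa ^+ 2 / z0 - 2 * sa * sg + sg ^+ 2 * z0.
Proof.
move=> hz0 hsg hy hsp hsa he.
rewrite -subr_gt0.
have -> : sa ^+ 2 / z0 - 2 * sa * sg + sg ^+ 2 * z0 -
   (sp ^+ 2 / z0 - 2 * sp * sg + sg ^+ 2 * z0 + 3 / (8 * z0))
  = (sa ^+ 2 - sp ^+ 2 - 3/8 - 2 * (z0 * sg) * (sa - sp)) / z0.
  by field; rewrite gt_eqF.
apply: divr_gt0 => //.
rewrite he.
have hsasp : sp <= sa by nra.
have hd : (sa - sp) * 2 <= 1 by nra.
set y := z0 * sg in hy *.
have hy0 : 0 <= y by apply: mulr_ge0; lra.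
nra.
Qed.

End NumB.

Lemma mi_indep (T : finType) (e : rel T) (A : {set T}) i :
  independent e A -> i \in A -> mi e A i = 0%N.
Proof.
move=> /forallP indA iA; apply/eqP; rewrite cards_eq0; apply/eqP/setP => j.
rewrite !inE; case jA: (j \in A); last by rewrite andbF.
have /implyP/(_ iA)/forallP/(_ j)/implyP/(_ jA) h := indA i.
by rewrite (negbTE h) andbF.
Qed.

Lemma opt_card (R : realType) (T : finType) (e : rel T)
  (e_sym : symmetric e) (e_irr : irreflexive e)
  (z0 gamma : R) (hz0 : 0 < z0) (hgamma : 0 < gamma)
  (hy : z0 * Num.sqrt gamma < 1/3) (ha : (1 <= alpha e)%N)
  (C : contract R T) (hC : optimal e z0 gamma C) :
  #|target C| = alpha e.
Proof.
set al := alpha e.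
have hsg : 0 < Num.sqrt gamma by rewrite sqrtr_gt0.
have hg2 : gamma = Num.sqrt gamma ^+ 2 by rewrite sqr_sqrtr // ltW.
set sg := Num.sqrt gamma in hsg hg2 hy.
have hsa1 : 1 <= Num.sqrt (al%:R : R).
  by rewrite -[X in X <= _]sqrtr1 ler_sqrt ?ler0n // ler1n.
have hsa2 : Num.sqrt (al%:R : R) ^+ 2 = al%:R by rewrite sqr_sqrtr ?ler0n.
set sa := Num.sqrt (al%:R : R) in hsa1 hsa2.
set Va := sa ^+ 2 / z0 - 2 * sa * sg + sg ^+ 2 * z0.
have indep0 : independent e set0 by apply/forallP => i; rewrite inE.
have [A indA maxA] : exists2 A, independent e A & #|A| = al.
  case: (@arg_maxnP _ set0 (independent e) (fun A => #|A|) indep0) => A indA hA.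
  exists A => //; apply/eqP; rewrite eqn_leq; apply/andP; split.
    exact: (@leq_bigmax_cond _ (independent e) (fun B => #|B|) A indA).
  by apply/bigmax_leqP => B hB; exact: hA.
have hzs_eq : Num.sqrt (al%:R / gamma) = sa / sg.
  by rewrite sqrtrM ?ler0n // sqrtrV // ltW.
set zs := Num.sqrt (al%:R / gamma) - z0.
have hzs : 0 < zs.
  rewrite /zs hzs_eq subr_gt0 ltr_pdivlMr //; lra.
pose Cs := Contract A zs (fun _ => Dl z0 zs 0).
have feasCs : feasible e z0 Cs.
  split => //=; split => i iA; first by apply: Dl_ge0 => //; exact: ltW.
  by rewrite /accepts /= (mi_indep indA iA).
have profCs : profit gamma Cs = Va.
  rewrite /profit /= sumr_const maxA /Dl mul0r addr0 mul1r -mulr_natr -hsa2 hg2 /zs hzs_eq /Va.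
  have hsa0 : 0 < sa by lra.
  by field; rewrite !gt_eqF //; lra.
have hopt := hC.2 Cs feasCs.
case: hC => [[hz [hp hacc]] _].
set M := target C in hacc hp hopt *; set z := prec C in hz hacc hopt.
have hprof : profit gamma C <= W e z0 z M - gamma * z.
  rewrite /profit lerD2r; apply: ler_sum => i iM; exact: hacc i iM.
rewrite profCs in hopt.
have hW0 : 0 <= W e z0 z M.
  by apply: sumr_ge0 => i _; apply: Dl_ge0 => //; exact: ltW.
have hgz : 0 <= gamma * z by apply: mulr_ge0; apply: ltW.
case: (boolP (independent e M)) => indM.
  have pM : (#|M| <= al)%N.
    exact: (@leq_bigmax_cond _ (independent e) (fun B => #|B|) M indM).
  move: pM; rewrite leq_eqVlt => /orP [/eqP //|hlt]; exfalso.
  have WM : W e z0 z M = #|M|%:R * Dl z0 z 0.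
    rewrite /W (eq_bigr (fun _ => Dl z0 z 0)); first by rewrite sumr_const mulr_natl.
    by move=> i iM; rewrite (mi_indep indM iM).
  have h1 := amgm sg hz0 (ler0n R #|M|) hz.
  have hp2 : Num.sqrt (#|M|%:R : R) ^+ 2 = #|M|%:R by rewrite sqr_sqrtr ?ler0n.
  have hlt' : Num.sqrt (#|M|%:R : R) < sa.
    by rewrite ltr_sqrt ?ltr_nat // ltr0n; apply: leq_trans ha.
  have h2 := N1 hz0 (ltW hsg) hy hsa1 (sqrtr_ge0 _) hlt'.
  rewrite hp2 in h2.
  rewrite WM in hprof.
  have h1' : #|M|%:R * Dl z0 z 0 - gamma * z <=
     #|M|%:R / z0 - 2 * Num.sqrt (#|M|%:R : R) * sg + sg ^+ 2 * z0 by rewrite {1}hg2.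
  rewrite -/Va in h2.
  by have := le_lt_trans (le_trans hopt (le_trans hprof h1')) h2; rewrite ltxx.
exfalso.
clear hacc hp feasCs profCs.
have [I [IM indI hI1 hI2]] := greedy e_sym e_irr hz0 hz M.
have hI := hI2 indM.
have pI : (#|I| <= al)%N.
  exact: (@leq_bigmax_cond _ (independent e) (fun B => #|B|) I indI).
have pIR : (#|I|%:R : R) <= al%:R by rewrite ler_nat.
have hc0 : 0 <= cst z0 by rewrite /cst; apply: divr_ge0 => //; lra.
have hD0 : 0 <= Dl z0 z 0 by apply: Dl_ge0 => //; exact: ltW.
have hN2 := N2 hz0 (ltW hsg) hy hsa1.
rewrite -/Va hsa2 -/(cst z0) in hN2.
move: hI; rewrite /Bz; case: (leP (Dl z0 z 0) (cst z0)) => hDc hI.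
  have : W e z0 z M <= al%:R * cst z0.
    have : #|I|%:R * cst z0 <= al%:R * cst z0 by apply: ler_wpM2r.
    lra.
  move=> h; lra.
have hWb : W e z0 z M <= (al.-1)%:R * Dl z0 z 0 + cst z0.
  have hal : (al%:R : R) = (al.-1)%:R + 1 by rewrite natr1 prednK.
  have : #|I|%:R * Dl z0 z 0 <= al%:R * Dl z0 z 0 by apply: ler_wpM2r.
  rewrite hal mulrDl mul1r; lra.
case: (ltngtP al 1) => [|hal2|hal1]; first by rewrite ltnNge ha.
  have hpos : (1 <= al.-1)%N by move: hal2; case: (al) => [|[|k]].
  have h1 := amgm sg hz0 (ler0n R al.-1) hz.
  have hsp1 : 1 <= Num.sqrt ((al.-1)%:R : R).
    by rewrite -[X in X <= _]sqrtr1 ler_sqrt ?ler0n // ler1n.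
  have hp2 : Num.sqrt ((al.-1)%:R : R) ^+ 2 = (al.-1)%:R by rewrite sqr_sqrtr ?ler0n.
  have hsa2' : sa ^+ 2 = Num.sqrt ((al.-1)%:R : R) ^+ 2 + 1.
    by rewrite hsa2 hp2 natr1 prednK.
  have h3 := N3 hz0 (ltW hsg) hy hsp1 (sqrtr_ge0 _) hsa2'.
  rewrite hp2 -/Va -/(cst z0) in h3.
  have h1' : (al.-1)%:R * Dl z0 z 0 - gamma * z <=
     (al.-1)%:R / z0 - 2 * Num.sqrt ((al.-1)%:R : R) * sg + sg ^+ 2 * z0 by rewrite {1}hg2.
  lra.
move: hWb; rewrite hal1 /= mul0r add0r => hWb.
move: hN2; rewrite hal1 mul1r => hN2.
lra.
Qed.

Unset Implicit Arguments. Set Strict Implicit.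

Lemma comp_sum (R : realType) (f : nat -> R) (hf : forall a b, (b <= a)%N -> f a <= f b)
  (k k' : seq nat) : all2 (fun a b => b <= a)%N k k' -> \sum_(x <- k) f x <= \sum_(x <- k') f x.
Proof.
elim: k k' => [|a k IH] [|b k'] //=; try by rewrite !big_nil.
move=> /andP [hab hall]; rewrite !big_cons; apply: lerD; first exact: hf.
exact: IH.
Qed.

Theorem proposition3 (R : realType) (T : finType) (e : rel T)
  (e_sym : symmetric e) (e_irr : irreflexive e)
  (z0 gamma : R) (hz0 : 0 < z0) (hgamma : 0 < gamma)
  (hcond : z0 < (2 * Num.sqrt gamma)^-1 *
                 ((#|T|%:R + 1) / (2 * #|T|%:R + 1)))
  (C C' : contract R T)
  (hC : optimal e z0 gamma C) (hC' : optimal e z0 gamma C') :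
  (comp_ge (kvec e (target C)) (kvec e (target C')) \/
   ((\sum_(x <- kvec e (target C)) x = \sum_(x <- kvec e (target C')) x)%N /\
    sosd R (kvec e (target C)) (kvec e (target C')))) ->
  welfare e z0 gamma (target C') <= welfare e z0 gamma (target C).
Proof.
move=> hk.
set al := alpha e.
case: (posnP al) => [al0|hal].
  have hT : forall x : T, False.
    move=> x.
    have : (1 <= al)%N.
      rewrite -(cards1 x); apply: (@leq_bigmax_cond _ (independent e) (fun B => #|B|)).
      apply/forallP => i; apply/implyP; rewrite inE => /eqP ->.
      apply/forallP => j; apply/implyP; rewrite inE => /eqP ->; by rewrite e_irr.
    by rewrite al0.
  have E : forall M, welfare e z0 gamma M = 0.
    by move=> M; rewrite /welfare !big1 ?oppr0 ?addr0 // => i _; case: (hT i).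
  by rewrite !E.
have hn : (al <= #|T|)%N by apply/bigmax_leqP => B _; exact: max_card.
have hsg : 0 < Num.sqrt gamma by rewrite sqrtr_gt0.
have hy : z0 * Num.sqrt gamma < 1/3.
  have hn1 : (1 : R) <= #|T|%:R by rewrite ler1n; apply: leq_trans hn.
  have hq : (#|T|%:R + 1) / (2 * #|T|%:R + 1) <= 2/3 :> R.
    rewrite ler_pdivrMr; last by lra.
    lra.
  rewrite ltr_pdivlMl in hcond; last by rewrite mulr_gt0.
  nra.
have c1 := opt_card e_sym e_irr hz0 hgamma hy hal hC.
have c2 := opt_card e_sym e_irr hz0 hgamma hy hal hC'.
have hsa1 : 1 <= Num.sqrt (al%:R : R).
  by rewrite -[X in X <= _]sqrtr1 ler_sqrt ?ler0n // ler1n.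
have hzs_eq : Num.sqrt (al%:R / gamma) = Num.sqrt (al%:R : R) / Num.sqrt gamma.
  by rewrite sqrtrM ?ler0n // sqrtrV // ltW.
set zs := Num.sqrt (al%:R / gamma) - z0.
have hzs : 0 <= zs.
  rewrite /zs hzs_eq subr_ge0 ler_pdivlMr //; lra.
pose f := fun x : nat => (z0 + x%:R * zs)^-1.
have wE : forall M : {set T}, #|M| = al ->
    welfare e z0 gamma M = - (al%:R * z0^-1) - \sum_(x <- kvec e M) f x.
  move=> M hM; rewrite /welfare sumr_const hM; congr (- _ - _); first by rewrite mulr_natl.
  have hp : perm_eq (kvec e M) [seq mi e M i | i <- enum (~: M)] by rewrite /kvec perm_sort.
  by rewrite (perm_big _ hp) big_map big_enum.
rewrite (wE _ c1) (wE _ c2) lerD2l lerN2.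
have fpos : forall x, 0 < z0 + x%:R * zs.
  by move=> x; have := mulr_ge0 (ler0n R x) hzs; move=> hh; lra.
case: hk => [hall|[hS hsosd]].
  apply: comp_sum => // a b hab.
  rewrite /f lef_pV2 ?posrE ?fpos //.
  by rewrite lerD2l; apply: ler_wpM2r => //; rewrite ler_nat.
have sizeE : forall M : {set T}, size (kvec e M) = #|~: M|.
  by move=> M; rewrite /kvec size_sort size_map -cardE.
have hsz : size (kvec e (target C)) = size (kvec e (target C')).
  rewrite !sizeE; have := cardsC (target C); have := cardsC (target C').
  rewrite c1 c2; lia.
apply: (@conv_sosd R f (\sum_(x <- kvec e (target C)) x)%N) => //.
- move=> j; exact: (Dl_decr hz0 hzs (leqnSn j)).
- by move=> x hx; rewrite (big_rem _ hx) /= leq_addr.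
- by move=> x hx; rewrite hS (big_rem _ hx) /= leq_addr.
move=> t; have := hsosd t%:R.
rewrite -hsz.
case: (posnP (size (kvec e (target C)))) => [s0|spos].
  move: (s0); rewrite hsz => s0'.
  move/eqP: s0; rewrite size_eq0 => /eqP ->.
  by move/eqP: s0'; rewrite size_eq0 => /eqP ->; rewrite !big_nil.
rewrite ler_pM2l //; rewrite invr_gt0 ltr0n //.
Qed.
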